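(* Let $\Omega\subset\mathbb{R}^N$ be open and bounded and let $p:\Omega\to(1,\infty)$ be Lipschitz continuous with $p^-:=\operatorname{ess\,inf}_\Omega p>1$. Let $q\ge2$ and let $u$ be a uniformly continuous viscosity supersolution to $-\Delta^N_{p(x)}u\ge0$ in $\Omega$. Then there is a function $E$ with $E(\varepsilon)\to0$ as $\varepsilon\to0$, depending only on $p$, $q$ and the modulus of continuity of $u$, such that for every $\varepsilon>0$: whenever $x\in\Omega_{r(\varepsilon)}$, $(\eta,X)\in J^{2,-}u_\varepsilon(x)$ and $\eta\ne0$, it holds $$|\eta|^{\min(p(x)-2,0)}F(x,\eta,X)\ge E(\varepsilon).$$
   Context: For $x\in\Omega$, $\eta\ne0$, $X$ symmetric $N\times N$: $F(x,\eta,X):=-\big(\operatorname{tr}X+\frac{p(x)-2}{|\eta|^2}\langle X\eta,\eta\rangle\big)$. The subjet $J^{2,-}v(x)$ is the set of $(\eta,X)$ with $v(y)\ge v(x)+\eta\cdot(y-x)+\frac12\langle X(y-x),y-x\rangle+o(|y-x|^2)$ as $y\to x$. A lower semicontinuous $u$ is a viscosity supersolution to $-\Delta^N_{p(x)}u\ge0$ if $F(x,\eta,X)\ge0$ whenever $x\in\Omega$, $(\eta,X)\in J^{2,-}u(x)$, $\eta\ne0$ (nothing required when $\eta=0$). Inf-convolution: for bounded $u\in C(\Omega)$, $q\ge2$, $\varepsilon>0$, $u_\varepsilon(x):=\inf_{y\in\Omega}\{u(y)+\frac{1}{q\varepsilon^{q-1}}|x-y|^q\}$. Set $r(\varepsilon):=(q\varepsilon^{q-1}\operatorname{osc}_\Omega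 u)^{1/q}$ and $\Omega_{r(\varepsilon)}:=\{x\in\Omega:\operatorname{dist}(x,\partial\Omega)>r(\varepsilon)\}$. *)

(* Defs.v *)
From HB Require Import structures.
From mathcomp Require Import all_boot all_order all_algebra.
From mathcomp Require Import all_classical all_reals all_analysis.
Set Implicit Arguments. Unset Strict Implicit. Unset Printing Implicit Defensive.
Import Order.TTheory GRing.Theory Num.Theory.
Local Open Scope classical_set_scope.
Local Open Scope ring_scope.

Section Defs.
Variables (R : realType) (N : nat).

Definition pl_dotv (x y : 'rV[R]_N) : R := \sum_(i < N) x 0 i * y 0 i.
Definition pl_enorm (x : 'rV[R]_N) : R := Num.sqrt (pl_dotv x x).
Definition pl_quadf (X : 'M[R]_N) (v : 'rV[R]_N) : R :=
  \sum_(i < N) \sum_(j < N) X i j * v 0 j * v 0 i.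
Definition pl_symmetric (X : 'M[R]_N) : Prop := X^T = X.

Definition pl_eopen (O : set 'rV[R]_N) : Prop :=
  forall x, O x -> exists r : R, 0 < r /\ forall y, pl_enorm (y - x) < r -> O y.
Definition pl_ebounded (O : set 'rV[R]_N) : Prop :=
  exists M : R, forall x, O x -> pl_enorm x <= M.
Definition pl_eclosure (O : set 'rV[R]_N) : set 'rV[R]_N :=
  [set z | forall e : R, 0 < e -> exists w, O w /\ pl_enorm (z - w) < e].
Definition pl_boundary (O : set 'rV[R]_N) : set 'rV[R]_N :=
  pl_eclosure O `\` O.
Definition pl_dist_to (x : 'rV[R]_N) (A : set 'rV[R]_N) : R :=
  inf [set pl_enorm (x - z) | z in A].
Definition pl_inner_set (O : set 'rV[R]_N) (r : R) : set 'rV[R]_N :=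
  [set x | O x /\ r < pl_dist_to x (pl_boundary O)].

Definition pl_lipschitz_on (O : set 'rV[R]_N) (f : 'rV[R]_N -> R) : Prop :=
  exists L : R, forall x y, O x -> O y -> `|f x - f y| <= L * pl_enorm (x - y).

Definition pl_modulus (w : R -> R) : Prop :=
  (forall t, 0 <= t -> 0 <= w t) /\
  (forall s t, 0 <= s -> s <= t -> w s <= w t) /\
  (w t @[t --> 0^'+] --> 0).
Definition pl_has_modulus (O : set 'rV[R]_N) (u : 'rV[R]_N -> R) (w : R -> R) : Prop :=
  forall x y, O x -> O y -> `|u x - u y| <= w (pl_enorm (x - y)).

Definition pl_Fop (p : 'rV[R]_N -> R) (x eta : 'rV[R]_N) (X : 'M[R]_N) : R :=
  - (\tr X + (p x - 2) / (pl_enorm eta ^+ 2) * pl_quadf X eta).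

Definition pl_subjet (O : set 'rV[R]_N) (v : 'rV[R]_N -> R) (x eta : 'rV[R]_N)
    (X : 'M[R]_N) : Prop :=
  pl_symmetric X /\
  forall d : R, 0 < d -> exists rho : R, 0 < rho /\
    forall y, O y -> pl_enorm (y - x) < rho ->
      v x + pl_dotv eta (y - x) + 2^-1 * pl_quadf X (y - x) - d * pl_enorm (y - x) ^+ 2
        <= v y.

Definition pl_lsc_on (O : set 'rV[R]_N) (u : 'rV[R]_N -> R) : Prop :=
  forall x, O x -> forall e : R, 0 < e -> exists rho : R, 0 < rho /\
    forall y, O y -> pl_enorm (y - x) < rho -> u x - e < u y.

Definition pl_visc_super (O : set 'rV[R]_N) (p u : 'rV[R]_N -> R) : Prop :=
  pl_lsc_on O u /\
  forall x eta X, O x -> pl_subjet O u x eta X -> eta != 0 -> 0 <= pl_Fop p x eta X.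

Definition pl_osc (O : set 'rV[R]_N) (u : 'rV[R]_N -> R) : R :=
  sup [set u y - u z | y in O & z in O].

Definition pl_infconv (O : set 'rV[R]_N) (u : 'rV[R]_N -> R) (q eps : R)
    (x : 'rV[R]_N) : R :=
  inf [set u y + (pl_enorm (x - y)) `^ q / (q * eps `^ (q - 1)) | y in O].

Definition pl_rad (O : set 'rV[R]_N) (u : 'rV[R]_N -> R) (q eps : R) : R :=
  (q * eps `^ (q - 1) * pl_osc O u) `^ (q^-1).

End Defs.

(* Main.v *)
Require Import Defs.
From HB Require Import structures.
From mathcomp Require Import all_boot all_order all_algebra.
From mathcomp Require Import all_classical all_reals all_analysis.
From mathcomp Require Import ring lra.
Import Order.TTheory GRing.Theory Num.Theory numFieldNormedType.Exports.
Local Open Scope classical_set_scope.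
Local Open Scope ring_scope.
Set Implicit Arguments. Unset Strict Implicit. Unset Printing Implicit Defensive.

Section Vec.
Variables (R : realType) (N : nat).
Implicit Types (u v : 'rV[R]_N).

Lemma dotC u v : pl_dotv u v = pl_dotv v u.
Proof. by apply: eq_bigr => i _; rewrite mulrC. Qed.

Lemma dotDl u v w : pl_dotv (u + v) w = pl_dotv u w + pl_dotv v w.
Proof. by rewrite /pl_dotv -big_split; apply: eq_bigr => i _; rewrite !mxE mulrDl. Qed.

Lemma dotZl a u w : pl_dotv (a *: u) w = a * pl_dotv u w.
Proof. by rewrite /pl_dotv mulr_sumr; apply: eq_bigr => i _; rewrite !mxE mulrA. Qed.

Lemma dotNl u w : pl_dotv (- u) w = - pl_dotv u w.
Proof. by rewrite -scaleN1r dotZl mulN1r. Qed.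

Lemma dotDr u v w : pl_dotv w (u + v) = pl_dotv w u + pl_dotv w v.
Proof. by rewrite dotC dotDl !(dotC w). Qed.

Lemma dotZr a u w : pl_dotv w (a *: u) = a * pl_dotv w u.
Proof. by rewrite dotC dotZl dotC. Qed.

Lemma dotNr u w : pl_dotv w (- u) = - pl_dotv w u.
Proof. by rewrite dotC dotNl dotC. Qed.

Lemma dotvv_ge0 v : 0 <= pl_dotv v v.
Proof. by apply: sumr_ge0 => i _; rewrite -expr2 sqr_ge0. Qed.

Lemma enorm_ge0 v : 0 <= pl_enorm v.
Proof. exact: sqrtr_ge0. Qed.

Lemma enorm_sq v : pl_enorm v ^+ 2 = pl_dotv v v.
Proof. by rewrite sqr_sqrtr // dotvv_ge0. Qed.

Lemma dotvv_eq0 v : pl_dotv v v = 0 -> v = 0.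
Proof.
move=> /eqP; rewrite psumr_eq0 => [/allP H|i _]; last by rewrite -expr2 sqr_ge0.
apply/rowP => i; rewrite mxE.
by have := H i (mem_index_enum i); rewrite /= -expr2 sqrf_eq0 => /eqP.
Qed.

Lemma enorm_eq0 v : pl_enorm v = 0 -> v = 0.
Proof. by move=> h; apply: dotvv_eq0; rewrite -enorm_sq h expr0n. Qed.

Lemma enorm_gt0 v : v != 0 -> 0 < pl_enorm v.
Proof.
move=> v0; rewrite lt_neqAle enorm_ge0 andbT; apply/eqP => h.
by move/eqP: v0; apply; apply: enorm_eq0.
Qed.

Lemma enorm0 : pl_enorm (0 : 'rV[R]_N) = 0.
Proof.
rewrite /pl_enorm /pl_dotv big1 ?sqrtr0 // => i _; by rewrite mxE mul0r.
Qed.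

Lemma CS_sq u v : pl_dotv u v ^+ 2 <= pl_dotv u u * pl_dotv v v.
Proof.
have [->|v0] := eqVneq v 0.
  have d0 : forall w, pl_dotv w (0 : 'rV[R]_N) = 0.
    by move=> w; rewrite /pl_dotv big1 // => i _; rewrite mxE mulr0.
  by rewrite !d0 expr0n mulr0.
have vv : 0 < pl_dotv v v.
  rewrite lt_neqAle dotvv_ge0 andbT; apply/eqP => /esym /dotvv_eq0 h.
  by rewrite h eqxx in v0.
set t := pl_dotv u v / pl_dotv v v.
have := dotvv_ge0 (u - t *: v).
rewrite !(dotDl, dotDr, dotNl, dotNr, dotZl, dotZr) (dotC v u).
move=> h.
have e : pl_dotv u u - t * pl_dotv u v +
    (- (t * pl_dotv u v) - t * - (t * pl_dotv v v))
   = pl_dotv u u - pl_dotv u v ^+ 2 / pl_dotv v v.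
  rewrite /t; field; by rewrite gt_eqF.
by rewrite e subr_ge0 ler_pdivrMr // in h.
Qed.

Lemma CS_abs u v : `|pl_dotv u v| <= pl_enorm u * pl_enorm v.
Proof.
rewrite -(ler_pXn2r (n := 2)) //; last by rewrite nnegrE mulr_ge0 // enorm_ge0.
by rewrite real_normK ?num_real // exprMn !enorm_sq CS_sq.
Qed.

Lemma CS u v : pl_dotv u v <= pl_enorm u * pl_enorm v.
Proof. exact: le_trans (ler_norm _) (CS_abs u v). Qed.

Lemma enormD u v : pl_enorm (u + v) <= pl_enorm u + pl_enorm v.
Proof.
rewrite -(ler_pXn2r (n := 2)) ?nnegrE ?addr_ge0 ?enorm_ge0 //.
rewrite enorm_sq !(dotDl, dotDr) sqrrD !enorm_sq (dotC v u).
have := CS u v; lra.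
Qed.

Lemma enormZ a v : pl_enorm (a *: v) = `|a| * pl_enorm v.
Proof.
rewrite /pl_enorm dotZl dotZr mulrA -expr2 sqrtrM ?sqr_ge0 //.
by rewrite sqrtr_sqr.
Qed.

Lemma enormN v : pl_enorm (- v) = pl_enorm v.
Proof. by rewrite -scaleN1r enormZ normrN normr1 mul1r. Qed.

Lemma enormB u v : pl_enorm (u - v) = pl_enorm (v - u).
Proof. by rewrite -enormN opprB. Qed.

Lemma enorm_tri u v w : pl_enorm (u - w) <= pl_enorm (u - v) + pl_enorm (v - w).
Proof. by have := enormD (u - v) (v - w); rewrite addrA subrK. Qed.

Lemma coord_le_enorm v i : `|v 0 i| <= pl_enorm v.
Proof.
rewrite -(ler_pXn2r (n := 2)) ?nnegrE ?enorm_ge0 //.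
rewrite real_normK ?num_real // enorm_sq /pl_dotv (bigD1 i) //= -expr2 lerDl.
by apply: sumr_ge0 => j _; rewrite -expr2 sqr_ge0.
Qed.

Lemma enorm_le_sum v : pl_enorm v <= \sum_i `|v 0 i|.
Proof.
rewrite -(ler_pXn2r (n := 2)) ?nnegrE ?enorm_ge0 ?sumr_ge0 //.
rewrite enorm_sq /pl_dotv expr2 mulr_suml; apply: ler_sum => i _.
rewrite (bigD1 i) //= mulrDr -normrM ler_wpDr ?ler_norm //.
by rewrite mulr_ge0 ?sumr_ge0.
Qed.

Lemma mxnorm_le_enorm v : `|v| <= pl_enorm v.
Proof.
rewrite [leLHS]/Num.norm /= mx_normrE; apply/bigmax_leP; split; first exact: enorm_ge0.
by move=> [i j] _ /=; rewrite (ord1 i); exact: coord_le_enorm.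
Qed.

Lemma coord_le_mxnorm v i : `|v 0 i| <= `|v|.
Proof.
rewrite [leRHS]/Num.norm /= mx_normrE; apply/bigmax_geP; right.
by exists (0, i).
Qed.

Lemma enorm_le_mxnorm v : pl_enorm v <= N%:R * `|v|.
Proof.
apply: le_trans (enorm_le_sum v) _.
have -> : N%:R * `|v| = \sum_(i < N) `|v| by rewrite sumr_const card_ord mulr_natl.
apply: ler_sum => i _.
exact: coord_le_mxnorm.
Qed.

End Vec.

Section Quad.
Variables (R : realType) (N : nat).
Implicit Types (u v k e : 'rV[R]_N) (X : 'M[R]_N).

Definition Xv X e : 'rV[R]_N := \row_i \sum_j X i j * e 0 j.
Definition CX X : R := \sum_i \sum_j `|X i j|.

Lemma CX_ge0 X : 0 <= CX X.
Proof. by apply: sumr_ge0 => i _; apply: sumr_ge0. Qed.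

Lemma quadf_bound X v : `|pl_quadf X v| <= CX X * pl_enorm v ^+ 2.
Proof.
rewrite /pl_quadf /CX mulr_suml.
apply: le_trans (ler_norm_sum _ _ _) _; apply: ler_sum => i _.
rewrite mulr_suml; apply: le_trans (ler_norm_sum _ _ _) _; apply: ler_sum => j _.
rewrite !normrM -mulrA ler_wpM2l //.
rewrite expr2; apply: ler_pM => //; exact: coord_le_enorm.
Qed.

Lemma symE X i j : pl_symmetric X -> X j i = X i j.
Proof. by move=> h; rewrite -{1}h mxE. Qed.

Lemma dot_Xv X e : pl_dotv e (Xv X e) = pl_quadf X e.
Proof.
rewrite /pl_dotv /pl_quadf; apply: eq_bigr => i _; rewrite mxE mulr_sumr.
by apply: eq_bigr => j _; ring.
Qed.

Lemma quadfD X a b : pl_symmetric X ->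
  pl_quadf X (a + b) = pl_quadf X a + 2 * pl_dotv (Xv X b) a + pl_quadf X b.
Proof.
move=> sX.
have c1 : \sum_i \sum_j X i j * b 0 j * a 0 i = pl_dotv (Xv X b) a.
  rewrite /pl_dotv; apply: eq_bigr => i _; rewrite mxE mulr_suml.
  by apply: eq_bigr => j _.
have c2 : \sum_i \sum_j X i j * a 0 j * b 0 i = pl_dotv (Xv X b) a.
  rewrite exchange_big /pl_dotv; apply: eq_bigr => j _; rewrite mxE mulr_suml.
  by apply: eq_bigr => i _; rewrite -(symE i j sX); ring.
rewrite (_ : 2 * pl_dotv (Xv X b) a = pl_dotv (Xv X b) a + pl_dotv (Xv X b) a);
  last by ring.
rewrite -{1}c1 -c2 /pl_quadf addrA -!big_split /=; apply: eq_bigr => i _.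
rewrite -!big_split /=; apply: eq_bigr => j _; rewrite !mxE; ring.
Qed.

Lemma quadfZ X t e : pl_quadf X (t *: e) = t ^+ 2 * pl_quadf X e.
Proof.
rewrite /pl_quadf mulr_sumr; apply: eq_bigr => i _; rewrite mulr_sumr.
by apply: eq_bigr => j _; rewrite !mxE; ring.
Qed.

Lemma XvZ X t e : Xv X (t *: e) = t *: Xv X e.
Proof.
apply/rowP => i; rewrite !mxE mulr_sumr; apply: eq_bigr => j _; rewrite !mxE; ring.
Qed.

Lemma quadf_shift X k e t : pl_symmetric X ->
  pl_quadf X (k + t *: e) =
  pl_quadf X k + 2 * t * pl_dotv (Xv X e) k + t ^+ 2 * pl_quadf X e.
Proof.
move=> sX; rewrite quadfD // XvZ dotZl quadfZ; ring.
Qed.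

Definition Xpp X e (b g : R) : 'M[R]_N :=
  \matrix_(i, j) (X i j + b * (e 0 i * Xv X e 0 j + Xv X e 0 i * e 0 j)
                   + g * (e 0 i * e 0 j)).


Lemma Xpp_symm X e b g : pl_symmetric X -> pl_symmetric (Xpp X e b g).
Proof.
move=> sX; apply/matrixP => i j; rewrite !mxE (symE i j sX); ring.
Qed.

Lemma quadf_Xpp X e b g k :
  pl_quadf (Xpp X e b g) k = pl_quadf X k
    + 2 * b * (pl_dotv e k * pl_dotv (Xv X e) k) + g * pl_dotv e k ^+ 2.
Proof.
have h1 : \sum_i \sum_j (b * (e 0 i * Xv X e 0 j)) * k 0 j * k 0 i
   = b * (pl_dotv e k * pl_dotv (Xv X e) k).
  rewrite /pl_dotv mulr_suml mulr_sumr; apply: eq_bigr => i _.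
  rewrite mulr_sumr mulr_sumr; apply: eq_bigr => j _; ring.
have h2 : \sum_i \sum_j (b * (Xv X e 0 i * e 0 j)) * k 0 j * k 0 i
   = b * (pl_dotv e k * pl_dotv (Xv X e) k).
  rewrite /pl_dotv mulr_suml mulr_sumr exchange_big; apply: eq_bigr => i _.
  rewrite mulr_sumr mulr_sumr; apply: eq_bigr => j _; ring.
have h3 : \sum_i \sum_j (g * (e 0 i * e 0 j)) * k 0 j * k 0 i
   = g * pl_dotv e k ^+ 2.
  rewrite /pl_dotv expr2 mulr_suml mulr_sumr; apply: eq_bigr => i _.
  rewrite mulr_sumr mulr_sumr; apply: eq_bigr => j _; ring.
have -> : 2 * b * (pl_dotv e k * pl_dotv (Xv X e) k) =
   b * (pl_dotv e k * pl_dotv (Xv X e) k) + b * (pl_dotv e k * pl_dotv (Xv X e) k)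
   by ring.
rewrite -{2}h1 -h2 -h3 /pl_quadf -!big_split /=; apply: eq_bigr => i _.
rewrite -!big_split /=; apply: eq_bigr => j _; rewrite !mxE; ring.
Qed.

Lemma tr_Xpp X e b g :
  \tr (Xpp X e b g) = \tr X + 2 * b * pl_quadf X e + g * pl_dotv e e.
Proof.
rewrite -dot_Xv /mxtrace /pl_dotv mulr_sumr mulr_sumr -!big_split /=.
apply: eq_bigr => i _; rewrite !mxE; ring.
Qed.

End Quad.

Section Cont.
Variables (R : realType).

Lemma cont_eps (V : normedModType R) (f : V -> R) a :
  (forall e, 0 < e -> exists2 d, 0 < d & forall b, `|a - b| < d -> `|f a - f b| < e) ->
  {for a, continuous f}.
Proof.
move=> H; apply/cvgrPdist_lt => e e0; apply/nbhs_normP.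
have [d d0 Hd] := H e e0; exists d => // b /= hb; exact: Hd.
Qed.

Lemma eps_cont (V : normedModType R) (f : V -> R) a :
  {for a, continuous f} ->
  (forall e, 0 < e -> exists2 d, 0 < d & forall b, `|a - b| < d -> `|f a - f b| < e).
Proof.
move=> /cvgrPdist_lt H e e0; have := H e e0 => /nbhs_normP [d d0 Hd].
by exists d => // b hb; apply: (Hd b).
Qed.

Lemma exp_quad (y : R) : y <= 2^-1 -> expR y <= 1 + y + 2 * y ^+ 2.
Proof.
move=> hy.
have h1 : 0 < 1 - y by lra.
have := expR_ge1Dx (- y); rewrite expRN => h.
have : expR y <= (1 - y)^-1.
  have := ler_wpM2r (expR_ge0 y) h; rewrite mulVf ?gt_eqF ?expR_gt0 // => h2.
  by rewrite -[leRHS]mul1r ler_pdivlMr // mulrC.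
move=> /le_trans; apply.
rewrite -[leLHS]mul1r ler_pdivrMr // -subr_ge0.
have -> : (1 + y + 2 * y ^+ 2) * (1 - y) - 1 = y ^+ 2 * (1 - 2 * y) by ring.
by rewrite mulr_ge0 ?sqr_ge0 //; lra.
Qed.

Lemma ln1p_le (u : R) : -1 < u -> ln (1 + u) <= u.
Proof.
move=> hu; rewrite -ler_expR lnK ?expR_ge1Dx //.
by rewrite posrE; lra.
Qed.

Lemma pow1p_le (m u : R) : 1 <= m -> `|m * u| <= 2^-1 ->
  (1 + u) `^ m <= 1 + m * u + 2 * m ^+ 2 * u ^+ 2.
Proof.
move=> m1 hmu.
have hu : `|u| <= 2^-1.
  apply: le_trans hmu; rewrite normrM ler_peMl //.
  by rewrite ger0_norm //; lra.
have hu' : -1 < u by move: hu; rewrite ler_norml; lra.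
have ne : (1 + u) != 0 by apply/eqP; lra.
rewrite /powR (negbTE ne).
have : expR (m * ln (1 + u)) <= expR (m * u).
  by rewrite ler_expR ler_wpM2l ?ln1p_le //; lra.
move=> /le_trans; apply.
have : m * u <= 2^-1 by move: hmu; rewrite ler_norml; lra.
move/exp_quad => /le_trans; apply.
by rewrite exprMn mulrA.
Qed.

Lemma powR_sq (a : R) : 0 <= a -> a `^ 2 = a ^+ 2.
Proof. by move=> a0; rewrite -powR_mulrn. Qed.

End Cont.

Section TB.
Variables (R : realType) (N : nat).

Definition CT (q : R) := q / 2 + 18 * (q / 2) ^+ 2.

Lemma TB (q : R) (z j : 'rV[R]_N) : 2 <= q -> z != 0 ->
  pl_enorm j <= pl_enorm z / (3 * q) ->
  pl_enorm (z + j) `^ q <= pl_enorm z `^ (q - 2) * pl_enorm z ^+ 2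
     + q * pl_enorm z `^ (q - 2) * pl_dotv z j
     + CT q * pl_enorm z `^ (q - 2) * pl_enorm j ^+ 2.
Proof.
move=> q2 z0 hj.
set r := pl_enorm z; set P := r `^ (q - 2); set e := pl_enorm j.
have r0 : 0 < r by exact: enorm_gt0.
have e0 : 0 <= e by exact: enorm_ge0.
have P0 : 0 <= P by exact: powR_ge0.
have q0 : 0 < q by lra.
have er : e <= r / (3 * q) by [].
have er1 : e <= r.
  apply: le_trans er _; rewrite ler_pdivrMr ?mulr_gt0 //; nra.
set w := 2 * pl_dotv z j + e ^+ 2.
have es : pl_enorm (z + j) ^+ 2 = r ^+ 2 + w.
  rewrite enorm_sq /w /e /r !enorm_sq !(dotDl, dotDr) (dotC j z); ring.
have hd : `|pl_dotv z j| <= r * e by exact: CS_abs.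
have hw : `|w| <= 3 * r * e.
  rewrite /w; apply: le_trans (ler_normD _ _) _.
  rewrite normrM (ger0_norm (_ : (0:R) <= 2)) // (ger0_norm (sqr_ge0 e)).
  have : e ^+ 2 <= r * e by rewrite expr2 ler_wpM2r.
  move: hd; rewrite -!mulrA; lra.
set u := w / r ^+ 2.
have r2 : 0 < r ^+ 2 by rewrite exprn_gt0.
have wu : w = r ^+ 2 * u by rewrite /u mulrC divfK ?gt_eqF.
have hmu : `|q / 2 * u| <= 2^-1.
  have hq2 : 0 <= q / 2 by rewrite divr_ge0 // ltW.
  have hr2 : 0 <= (r ^+ 2)^-1 by rewrite invr_ge0 ltW.
  rewrite /u normrM (ger0_norm hq2) normrM (ger0_norm hr2).
  have hw2 : `|w| <= r ^+ 2 / q.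
    apply: le_trans hw _.
    have : 3 * r * e <= 3 * r * (r / (3 * q)).
      by apply: ler_wpM2l => //; rewrite mulr_ge0 // ltW.
    move=> /le_trans; apply; rewrite le_eqVlt; apply/orP; left; apply/eqP; field; lra.
  have : q / 2 * (`|w| * (r ^+ 2)^-1) <= q / 2 * (r ^+ 2 / q * (r ^+ 2)^-1).
    apply: ler_wpM2l; first by rewrite divr_ge0 // ltW.
    by apply: ler_wpM2r => //; rewrite invr_ge0 ltW.
  move=> /le_trans; apply; rewrite le_eqVlt; apply/orP; left; apply/eqP; field; rewrite gt_eqF //=; lra.
have m1 : 1 <= q / 2 by rewrite ler_pdivlMr //; lra.
have Hpow := pow1p_le m1 hmu.
have hsq : pl_enorm (z + j) `^ q = (pl_enorm (z + j) ^+ 2) `^ (q / 2).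
  rewrite -(powR_sq (enorm_ge0 (z + j))) -powRrM; congr (_ `^ _); field; lra.
have rq : (r ^+ 2) `^ (q / 2) = P * r ^+ 2.
  rewrite -(powR_sq (ltW r0)) -powRrM /P -powRD; last first.
    by apply/implyP => _; rewrite gt_eqF.
  congr (_ `^ _); field; lra.
rewrite hsq es wu -{1}(mulr1 (r ^+ 2)) -mulrDr (@powRM _ (r ^+ 2) (1 + u) (q / 2) (ltW r2)); last first.
  have hq2 : 0 <= q / 2 by rewrite divr_ge0 // ltW.
  move: hmu; rewrite normrM (ger0_norm hq2) => hmu'.
  have : `|u| <= q / 2 * `|u| by rewrite ler_peMl.
  move=> h; have : `|u| <= 2^-1 by apply: le_trans h _.
  rewrite ler_norml => /andP [h1 h2].
  have : - 1 < - 2^-1 :> R by rewrite ltrN2 invf_lt1 //; lra.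
  lra.
rewrite rq.
have step1 : P * r ^+ 2 * (1 + u) `^ (q / 2) <=
    P * r ^+ 2 * (1 + q / 2 * u + 2 * (q / 2) ^+ 2 * u ^+ 2).
  by apply: ler_wpM2l Hpow; exact: mulr_ge0 P0 (ltW r2).
apply: le_trans step1 _.
have hu2 : r ^+ 2 * u ^+ 2 <= 9 * e ^+ 2.
  have h : (r ^+ 2 * u) ^+ 2 <= (3 * r * e) ^+ 2.
    have := ler_pM (normr_ge0 w) (normr_ge0 w) hw hw.
    by rewrite -expr2 real_normK ?num_real // -wu expr2.
  have E : (r ^+ 2 * u) ^+ 2 = r ^+ 2 * (r ^+ 2 * u ^+ 2) by ring.
  have E2 : (3 * r * e) ^+ 2 = r ^+ 2 * (9 * e ^+ 2) by ring.
  by rewrite E E2 ler_pM2l in h.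
have dj : w = 2 * pl_dotv z j + e ^+ 2 by [].
rewrite mulrDr mulrDr mulr1.
have E1 : P * r ^+ 2 * (q / 2 * u) = q * P * pl_dotv z j + q / 2 * P * e ^+ 2.
  rewrite (_ : P * r ^+ 2 * (q / 2 * u) = q / 2 * P * (r ^+ 2 * u)); last by ring.
  by rewrite -wu dj; field.
rewrite E1.
have E2 : P * r ^+ 2 * (2 * (q / 2) ^+ 2 * u ^+ 2) <= 18 * (q / 2) ^+ 2 * P * e ^+ 2.
  rewrite (_ : P * r ^+ 2 * (2 * (q / 2) ^+ 2 * u ^+ 2) =
     2 * (q / 2) ^+ 2 * P * (r ^+ 2 * u ^+ 2)); last by ring.
  rewrite (_ : 18 * (q / 2) ^+ 2 * P * e ^+ 2 = 2 * (q / 2) ^+ 2 * P * (9 * e ^+ 2));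
    last by ring.
  by rewrite ler_wpM2l // mulr_ge0 // mulr_ge0 // sqr_ge0.
rewrite /CT; lra.
Qed.

Lemma powq_small (q a : R) : 2 <= q -> 0 <= a -> a <= 1 -> a `^ q <= a ^+ 2.
Proof.
move=> q2 a0 a1; have [->|an0] := eqVneq a 0.
  by rewrite powR0 ?expr0n //; apply/eqP; lra.
rewrite -powR_sq //; apply: ger_powR => //.
by rewrite lt_neqAle eq_sym an0 a0.
Qed.

End TB.

Section Ball.
Variables (R : realType) (N : nat).

Lemma dist_le (O : set 'rV[R]_N) x w : pl_boundary O w ->
  pl_dist_to x (pl_boundary O) <= pl_enorm (x - w).
Proof.
move=> bw; apply: ge_inf; last by exists w.
by exists 0 => _ [z _ <-]; exact: enorm_ge0.
Qed.

Lemma seg_dist (x d : 'rV[R]_N) (a b : R) :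
  pl_enorm ((x + a *: d) - (x + b *: d)) = `|a - b| * pl_enorm d.
Proof. by rewrite opprD addrACA subrr add0r -scalerBl enormZ. Qed.

Lemma ball_in (O : set 'rV[R]_N) x (rho : R) : pl_eopen O -> O x ->
  rho < pl_dist_to x (pl_boundary O) ->
  forall y, pl_enorm (y - x) <= rho -> O y.
Proof.
move=> oO Ox hrho y hy.
set d := y - x.
pose p (s : R) := x + s *: d.
have p0 : p 0 = x by rewrite /p scale0r addr0.
have p1 : p 1 = y by rewrite /p scale1r /d addrC subrK.
pose S := [set t : R | (0 <= t <= 1) /\ forall s, 0 <= s <= t -> O (p s)].
have S0 : S 0.
  split; first by rewrite lexx ler01.
  move=> s /andP[s0 s0']; have -> : s = 0 by apply/eqP; rewrite eq_le s0 s0'.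
  by rewrite p0.
have hS : has_sup S.
  split; first by exists 0.
  by exists 1 => t [/andP[_ ]].
set T := sup S.
have T0 : 0 <= T by exact: sup_upper_bound.
have T1 : T <= 1.
  by apply: ge_sup; [exists 0 | move=> t [/andP[_ ]]].
have dp : forall a b, pl_enorm (p a - p b) = `|a - b| * pl_enorm d.
  by move=> a b; exact: seg_dist.
have hd0 := enorm_ge0 d.
have A : forall s, 0 <= s < T -> O (p s).
  move=> s /andP[s0 sT].
  have [t St st] : exists2 t, S t & T - (T - s) < t.
    by apply: sup_adherent => //; rewrite subr_gt0.
  move: st; rewrite opprB addrC subrK => st.
  by case: St => _ /(_ s); apply; rewrite s0 ltW.
have [OpT|nOpT] := pselect (O (p T)).
  have [r [r0 Hr]] := oO _ OpT.
  have [T1'|Tlt1] := eqVneq T 1; first by rewrite -p1 -T1'.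
  have Tl1 : T < 1 by rewrite lt_neqAle Tlt1 T1.
  set T' := Num.min 1 (T + r / (pl_enorm d + 1)).
  have dpos : 0 < pl_enorm d + 1 by lra.
  have rdp : 0 < r / (pl_enorm d + 1) by rewrite divr_gt0.
  have TT' : T < T'.
    by rewrite /T' lt_min Tl1 /=; lra.
  have ST' : S T'.
    split.
      apply/andP; split; last by rewrite /T' ge_min lexx.
      by apply: le_trans T0 (ltW TT').
    move=> s /andP[s0 sT'].
    have [sT|Ts] := ltP s T; first by apply: A; rewrite s0 sT.
    apply: Hr; rewrite dp ger0_norm ?subr_ge0 //.
    have : s - T <= r / (pl_enorm d + 1).
      have : s <= T + r / (pl_enorm d + 1).
        by apply: le_trans sT' _; rewrite /T' ge_min lexx orbT.
      lra.
    move=> h; apply: (@le_lt_trans _ _ (r / (pl_enorm d + 1) * pl_enorm d)).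
      by apply: ler_wpM2r.
    rewrite mulrAC ltr_pdivrMr // ltr_pM2l //; lra.
  have := sup_upper_bound hS ST'; rewrite -/T; lra.
exfalso.
have Tpos : 0 < T.
  rewrite lt_neqAle T0 andbT; apply/eqP => T0'.
  by apply: nOpT; rewrite -T0' p0.
have bd : pl_boundary O (p T).
  split => //= e e0.
  set s := Num.max 0 (T - e / (pl_enorm d + 1)).
  have dpos : 0 < pl_enorm d + 1 by lra.
  have edp : 0 < e / (pl_enorm d + 1) by rewrite divr_gt0.
  have s0 : 0 <= s by rewrite /s le_max lexx.
  have sT : s < T by rewrite /s gt_max Tpos /=; lra.
  exists (p s); split; first by apply: A; rewrite s0 sT.
  rewrite dp ger0_norm ?subr_ge0 ?ltW //.
  have : T - s <= e / (pl_enorm d + 1).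
    have : T - e / (pl_enorm d + 1) <= s by rewrite /s le_max lexx orbT.
    lra.
  move=> h; apply: (@le_lt_trans _ _ (e / (pl_enorm d + 1) * pl_enorm d)).
    by apply: ler_wpM2r.
  rewrite mulrAC ltr_pdivrMr // ltr_pM2l //; lra.
have := dist_le x bd.
have : pl_enorm (x - p T) <= rho.
  rewrite -p0 dp sub0r normrN ger0_norm //.
  apply: le_trans hy; rewrite -/d -[leRHS]mul1r ler_wpM2r //.
lra.
Qed.

End Ball.

Section Cont2.
Variables (R : realType).

Lemma powq_cont_pos (q a : R) : 0 < a -> {for a, continuous (fun t : R => t `^ q)}.
Proof.
move=> a0.
have := @derivable_powR R 1 q a; rewrite in_itv /= andbT => /(_ a0) h.
by apply: differentiable_continuous; apply/derivable1_diffP.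
Qed.

Lemma abs_powq_cont (q : R) : 2 <= q -> continuous (fun t : R => `|t| `^ q).
Proof.
move=> q2 a.
have hq0 : q != 0 by rewrite gt_eqF //; lra.
have [->|a0] := eqVneq a 0.
  apply: cont_eps => e e0; exists (Num.min 1 e); first by rewrite lt_min ltr01 e0.
  move=> b; rewrite lt_min sub0r normrN => /andP[b1 be].
  rewrite normr0 powR0 //.
  rewrite sub0r.
  rewrite normrN.
  rewrite ger0_norm; last exact: powR_ge0.
  apply: le_lt_trans be; apply: le_trans (powq_small q2 (normr_ge0 b) (ltW b1)) _.
  by rewrite expr2; apply: ler_piMr; [exact: normr_ge0 | exact: ltW b1].
apply: (@continuous_comp _ _ _ (fun t : R => `|t|) (fun t : R => t `^ q)); first exact: norm_continuous.
by apply: powq_cont_pos; rewrite normr_gt0.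
Qed.

End Cont2.

Lemma fin9 (R : realType) (T Q n2 b px py Cb : R) : n2 != 0 ->
  - (T + 2 * (b / n2) * Q + (b ^+ 2 * (Q - 2 * Cb * n2) / n2 ^+ 2) * n2 +
     (py - 2) / n2 * (Q + 2 * (b / n2) * (n2 * Q) + (b ^+ 2 * (Q - 2 * Cb * n2) / n2 ^+ 2) * n2 ^+ 2))
  = - (T + (px - 2) / n2 * Q) + (py - 1) * (2 * Cb) * b ^+ 2
    - Q / n2 * ((py - 1) * (1 + b) ^+ 2 - (px - 1)).
Proof. by move=> n0; field. Qed.

Lemma fin10 (R : realType) (a : R) : 0 <= a -> (Num.sqrt a - 1) ^+ 2 <= (a - 1) ^+ 2.
Proof.
move=> a0; set s := Num.sqrt a.
have s0 : 0 <= s by exact: sqrtr_ge0.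
have -> : a - 1 = (s - 1) * (s + 1) by rewrite /s; rewrite mulrDr mulr1 mulrBl -expr2 sqr_sqrtr //; ring.
rewrite exprMn -[leLHS]mulr1 ler_wpM2l ?sqr_ge0 //.
have : 1 <= s + 1 by lra.
move=> h; rewrite expr2; have := ler_pM ler01 ler01 h h; by rewrite mulr1.
Qed.

Lemma fin11 (R : realType) (n m A wr r q : R) : 0 < n -> -1 <= m -> m <= 0 -> 0 < q ->
  0 <= A -> A <= wr -> 0 <= wr -> 0 <= r -> A = n * r / q -> n `^ m * A <= wr + r / q.
Proof.
move=> n0 m1 m0 q0 A0 Aw w0 r0 hA.
have rq0 : 0 <= r / q by rewrite divr_ge0 // ltW.
have [n1|n1] := leP 1 n.
  have : n `^ m <= 1.
    by have := ler_powR n1 m0; rewrite powRr0.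
  move=> h; apply: (@le_trans _ _ A); last by lra.
  by rewrite -[leRHS]mul1r; apply: ler_wpM2r.
have : n `^ m <= n `^ (-1).
  by apply: ger_powR => //; rewrite n0 ltW.
rewrite powR_inv1; last exact: ltW.
move=> h.
have : n `^ m * A <= n^-1 * A by apply: ler_wpM2r.
move=> /le_trans; apply.
rewrite hA (_ : n^-1 * (n * r / q) = r / q); last by rewrite !mulrA mulVf ?mul1r // gt_eqF.
lra.
Qed.

Lemma fin12 (R : realType) (G Fx C5 A S : R) : 0 <= G -> 0 <= C5 ->
  - (C5 * A) <= Fx -> G * A <= S -> - C5 * S <= G * Fx.
Proof.
move=> G0 C0 h1 h2.
have : G * - (C5 * A) <= G * Fx by apply: ler_wpM2l.
have : C5 * (G * A) <= C5 * S by apply: ler_wpM2l.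
have -> : G * - (C5 * A) = - (C5 * (G * A)) by ring.
rewrite mulNr; lra.
Qed.

Lemma eqle (R : realType) (a b : R) : a = b -> a <= b. Proof. by move=> ->. Qed.

Lemma fin1 (R : realType) (U t n2 B CXv Ph K : R) : 0 < K ->
  - (CXv * (t ^+ 2 * n2)) <= B -> Ph <= t ^+ 2 * n2 / K ->
  U + t * n2 + 2^-1 * B - 1 * (t ^+ 2 * n2) <= U + Ph ->
  t * n2 <= (2^-1 * CXv + 1 + K^-1) * t ^+ 2 * n2.
Proof.
move=> K0.
have -> : (2^-1 * CXv + 1 + K^-1) * t ^+ 2 * n2 =
   2^-1 * (CXv * (t ^+ 2 * n2)) + t ^+ 2 * n2 + t ^+ 2 * n2 / K by ring.
move: (t ^+ 2 * n2) => A.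
rewrite mul1r.
move: (CXv * A) (A / K) (t * n2) => CA AK T.
lra.
Qed.

Lemma fin2 (R : realType) (U PZ Deta Dg T B CXv Ph E Cb : R) :
  U + PZ + Deta + 2^-1 * B - 1 * E <= U + Ph ->
  Ph <= PZ + Dg + Cb * E ->
  Deta = T + Dg ->
  - (CXv * E) <= B ->
  T <= 2^-1 * (CXv * E) + E + Cb * E.
Proof.
move=> h1 h2 h3 h4; rewrite mul1r in h1.
move: h1 h2 h3 h4; move: (CXv * E) (Cb * E) => CE CbE; lra.
Qed.

Lemma fin3 (R : realType) (a P r2 qq d C E K : R) : 0 < K ->
  a <= P * r2 + qq * P * d + C * P * E ->
  a / K <= P * r2 / K + (qq * P / K) * d + (C * P / K) * E.
Proof.
move=> K0 h.
have -> : P * r2 / K + (qq * P / K) * d + (C * P / K) * E =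
  (P * r2 + qq * P * d + C * P * E) / K by field; rewrite gt_eqF.
by rewrite ler_pM2r ?invr_gt0.
Qed.

Lemma powR_split (R : realType) (r q : R) : 0 < r -> r `^ q = r `^ (q - 2) * r ^+ 2.
Proof.
move=> r0; rewrite -(powR_sq (ltW r0)) -powRD; last by apply/implyP => _; rewrite gt_eqF.
by congr (_ `^ _); ring.
Qed.

Lemma fin4 (R : realType) (U Uy PZ Dk Dj Xh Xk Ph Cb Ej D0Eh DEk : R) :
  U + PZ + (Dk + Dj) + 2^-1 * Xh - D0Eh <= Uy + Ph ->
  Ph <= PZ + Dj + Cb * Ej ->
  Xk = Xh - 2 * Cb * Ej ->
  D0Eh <= DEk ->
  U + Dk + 2^-1 * Xk - DEk <= Uy.
Proof.
move=> h1 h2 h3 h4; rewrite h3.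
have -> : 2 * Cb * Ej = 2 * (Cb * Ej) by ring.
move: h1 h2 h4; move: (Cb * Ej) => CE; lra.
Qed.

Lemma fin5 (R : realType) (Xk Dk XeK Q n2 b Cb : R) : n2 != 0 ->
  Xk + 2 * (b / n2) * (Dk * XeK) + (b ^+ 2 * (Q - 2 * Cb * n2) / n2 ^+ 2) * Dk ^+ 2 =
  (Xk + 2 * (b * Dk / n2) * XeK + (b * Dk / n2) ^+ 2 * Q)
    - 2 * Cb * ((b * Dk / n2) ^+ 2 * n2).
Proof. by move=> n0; field. Qed.

Lemma fin7 (R : realType) (b D n ek : R) : 0 < n -> `|D| <= n * ek ->
  `|b * D / n ^+ 2| * n <= `|b| * ek.
Proof.
move=> n0 hD.
rewrite !normrM normfV (ger0_norm (sqr_ge0 n)) -!mulrA ler_wpM2l //.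
have -> : `|D| * ((n ^+ 2)^-1 * n) = `|D| / n by field; rewrite gt_eqF.
by rewrite ler_pdivrMr // mulrC.
Qed.

Lemma fin8 (R : realType) (d B1 eh ek : R) : 0 < d -> 0 < B1 -> 0 <= eh ->
  eh <= B1 * ek -> d / B1 ^+ 2 * eh ^+ 2 <= d * ek ^+ 2.
Proof.
move=> d0 B0 eh0 h.
have h2 : eh ^+ 2 <= (B1 * ek) ^+ 2.
  by rewrite ler_pXn2r ?nnegrE // (le_trans eh0 h).
rewrite -mulrA ler_pM2l // exprMn in h2 *.
by rewrite ler_pdivrMl ?exprn_gt0.
Qed.

Lemma zm (R : comRingType) n (a b c e : 'rV[R]_n) : a + ((b - c) + e) - b = (a - c) + e.
Proof. apply/rowP => i; rewrite !mxE; ring. Qed.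

Section Main.
Variables (R : realType) (N : nat) (Omega : set 'rV[R]_N) (p : 'rV[R]_N -> R).
Variables (q : R) (w : R -> R) (L pm W : R).
Hypothesis oO : pl_eopen Omega.
Hypothesis q2 : 2 <= q.
Hypothesis hL : forall x y, Omega x -> Omega y -> `|p x - p y| <= L * pl_enorm (x - y).
Hypothesis pm1 : 1 < pm.
Hypothesis hpm : forall x, Omega x -> pm <= p x.
Hypothesis wmon : forall s t, 0 <= s -> s <= t -> w s <= w t.
Hypothesis wge0 : forall t, 0 <= t -> 0 <= w t.
Hypothesis wsmall : forall e, 0 < e -> exists2 d, 0 < d & forall t, 0 <= t -> t < d -> w t < e.
Hypothesis hW : forall x y, Omega x -> Omega y -> w (pl_enorm (x - y)) <= W.

Variables (u : 'rV[R]_N -> R) (eps : R) (x eta : 'rV[R]_N) (X : 'M[R]_N).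
Hypothesis hmod : pl_has_modulus Omega u w.
Hypothesis hvs : pl_visc_super Omega p u.
Hypothesis eps0 : 0 < eps.
Hypothesis hin : pl_inner_set Omega (pl_rad Omega u q eps) x.
Hypothesis hsub : pl_subjet Omega (pl_infconv Omega u q eps) x eta X.
Hypothesis eta0 : eta != 0.

Let Ke := q * eps `^ (q - 1).
Let phi (v : 'rV[R]_N) := pl_enorm v `^ q / Ke.

Lemma q0 : 0 < q. Proof. by apply: lt_le_trans q2. Qed.
Lemma Ke0 : 0 < Ke. Proof. by rewrite /Ke mulr_gt0 ?q0 ?powR_gt0. Qed.
Lemma phi_ge0 v : 0 <= phi v.
Proof. by rewrite /phi divr_ge0 ?powR_ge0 // ltW // Ke0. Qed.
Lemma phi0 : phi 0 = 0.
Proof. by rewrite /phi enorm0 powR0 ?mul0r // gt_eqF // q0. Qed.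

Lemma Ox : Omega x. Proof. by case: hin. Qed.

Lemma ubound y z : Omega y -> Omega z -> u y - u z <= W.
Proof.
move=> Oy Oz; apply: le_trans (ler_norm _) _; apply: le_trans (hmod Oy Oz) _.
exact: hW.
Qed.

Lemma infle v y : Omega y -> pl_infconv Omega u q eps v <= u y + phi (v - y).
Proof.
move=> Oy; apply: ge_inf; last by exists y.
exists (u x - W) => _ [y' Oy' <-].
have := ubound Ox Oy'; have := phi_ge0 (v - y'); rewrite /phi /Ke; lra.
Qed.

Let oscS := [set u y - u z | y in Omega & z in Omega].
Lemma osc_hs : has_sup oscS.
Proof.
split; first by exists (u x - u x), x; [exact: Ox | exists x => //; exact: Ox].
by exists W => _ [y Oy [z Oz <-]]; exact: ubound.
Qed.
Lemma osc_ub y z : Omega y -> Omega z -> u y - u z <= pl_osc Omega u.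
Proof.
move=> Oy Oz; apply: sup_upper_bound; first exact: osc_hs.
by exists y => //; exists z.
Qed.
Lemma osc_ge0 : 0 <= pl_osc Omega u.
Proof. by have := osc_ub Ox Ox; rewrite subrr. Qed.


Lemma enorm_rev (a b : 'rV[R]_N) : `|pl_enorm a - pl_enorm b| <= pl_enorm (a - b).
Proof.
have h1 : pl_enorm a <= pl_enorm (a - b) + pl_enorm b.
  by have := enormD (a - b) b; rewrite subrK.
have h2 : pl_enorm b <= pl_enorm (a - b) + pl_enorm a.
  by have := enormD (b - a) a; rewrite subrK enormB.
rewrite ler_norml; apply/andP; split; lra.
Qed.

Lemma enorm_mx (v : 'rV[R]_N) : pl_enorm v <= (N%:R + 1) * `|v|.
Proof.
apply: le_trans (enorm_le_mxnorm v) _; rewrite ler_wpM2r //; lra.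
Qed.

Lemma u_cont (y : 'rV[R]_N) : Omega y -> {for y, continuous u}.
Proof.
move=> Oy; apply: cont_eps => e e0.
have [d1 d10 Hd1] := wsmall e0.
have [ry [ry0 Hry]] := oO Oy.
have N1 : 0 < N%:R + 1 :> R by rewrite ltr_wpDl.
exists (Num.min d1 ry / (N%:R + 1)); first by rewrite divr_gt0 // lt_min d10 ry0.
move=> b hb.
have hb' : pl_enorm (y - b) < Num.min d1 ry.
  apply: le_lt_trans (enorm_mx _) _; by rewrite mulrC -ltr_pdivlMr.
move: hb'; rewrite lt_min => /andP[h1 h2].
have Ob : Omega b by apply: Hry; rewrite enormB.
apply: le_lt_trans (hmod Oy Ob) _; apply: Hd1 => //; exact: enorm_ge0.
Qed.

Lemma phi_cont (y : 'rV[R]_N) : {for y, continuous (fun b : 'rV[R]_N => phi (x - b))}.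
Proof.
apply: cont_eps => e e0.
have q2' := q2.
have Ke0' := Ke0.
have := @abs_powq_cont R q q2' (pl_enorm (x - y)).
move=> /eps_cont /(_ (e * Ke)) [|d2 d20 Hd2]; first by rewrite mulr_gt0.
have N1 : 0 < N%:R + 1 :> R by rewrite ltr_wpDl.
exists (d2 / (N%:R + 1)); first by rewrite divr_gt0.
move=> b hb.
have : `|pl_enorm (x - y) - pl_enorm (x - b)| < d2.
  apply: le_lt_trans (enorm_rev _ _) _.
  rewrite (_ : x - y - (x - b) = b - y); last by rewrite opprB addrC addrA subrK.
  apply: le_lt_trans (enorm_mx _) _; rewrite distrC mulrC -ltr_pdivlMr //.
move=> /Hd2; rewrite (ger0_norm (enorm_ge0 _)) (ger0_norm (enorm_ge0 _)) => h.
have Kinv : 0 <= Ke^-1 by rewrite invr_ge0 ltW.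
by rewrite /phi -mulrBl normrM (ger0_norm Kinv) ltr_pdivrMr.
Qed.

Lemma g_cont (y : 'rV[R]_N) : Omega y -> {for y, continuous (fun b : 'rV[R]_N => u b + phi (x - b))}.
Proof.
move=> Oy; apply: cont_eps => e e0.
have e2 : 0 < e / 2 by rewrite divr_gt0.
have [d1 d10 H1] := eps_cont (u_cont Oy) e2.
have [d2 d20 H2] := eps_cont (@phi_cont y) e2.
exists (Num.min d1 d2); first by rewrite lt_min d10 d20.
move=> b; rewrite lt_min => /andP[b1 b2].
have := H1 b b1; have := H2 b b2.
rewrite (_ : u y + phi (x - y) - (u b + phi (x - b)) =
   (u y - u b) + (phi (x - y) - phi (x - b))); last by rewrite opprD addrACA.
move=> h2 h1; apply: le_lt_trans (ler_normD _ _) _.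
have -> : e = e / 2 + e / 2 by field.
exact: ltrD.
Qed.


Lemma rad_pow : pl_rad Omega u q eps `^ q = Ke * pl_osc Omega u.
Proof.
rewrite /pl_rad -powRrM mulVf ?gt_eqF ?q0 // powRr1 //.
by rewrite mulr_ge0 ?osc_ge0 // ltW // Ke0.
Qed.

Lemma far y : Omega y -> pl_dist_to x (pl_boundary Omega) + pl_rad Omega u q eps
    < 2 * pl_enorm (y - x) -> u x < u y + phi (x - y).
Proof.
move=> Oy hy.
set rad := pl_rad Omega u q eps.
have rad0 : 0 <= rad by exact: powR_ge0.
have [_ hrd] := hin.
have hr : rad < pl_enorm (x - y) by rewrite enormB; move: hrd hy; rewrite -/rad; lra.
have hq := q0.
have : rad `^ q < pl_enorm (x - y) `^ q.
  by apply: gt0_ltr_powR => //; rewrite nnegrE ?enorm_ge0.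
rewrite rad_pow => h.
have : pl_osc Omega u < phi (x - y).
  by rewrite /phi ltr_pdivlMr ?Ke0 // mulrC.
have := osc_ub Ox Oy; lra.
Qed.

Lemma minimizer : exists ys : 'rV[R]_N, Omega ys /\ (pl_infconv Omega u q eps x = u ys + phi (x - ys)).
Proof.
set dist := pl_dist_to x (pl_boundary Omega).
set rad := pl_rad Omega u q eps.
have rad0 : 0 <= rad by exact: powR_ge0.
have [_ hrd] := hin.
set rho := (dist + rad) / 2.
have rho_d : rho < dist by rewrite /rho; move: hrd; rewrite -/rad -/dist; lra.
have rho0 : 0 <= rho by rewrite /rho; move: hrd rad0; rewrite -/rad -/dist; lra.
pose K := [set y : 'rV[R]_N | pl_enorm (y - x) <= rho].
have KO : forall y, K y -> Omega y := ball_in oO Ox rho_d.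
have Kx : K x by rewrite /K /= subrr enorm0.
have contd : continuous (fun y : 'rV[R]_N => pl_enorm (y - x)).
  move=> y; apply: cont_eps => e e0.
  have N1 : 0 < N%:R + 1 :> R by rewrite ltr_wpDl.
  exists (e / (N%:R + 1)); first by rewrite divr_gt0.
  move=> b hb; apply: le_lt_trans (enorm_rev _ _) _.
  rewrite (_ : y - x - (b - x) = y - b); last by rewrite opprB addrA subrK.
  by apply: le_lt_trans (enorm_mx _) _; rewrite mulrC -ltr_pdivlMr.
have Kcl : closed K.
  exact: (proj1 (continuous_closedP _) contd _ (@closed_le R rho)).
have Kbd : bounded_set K.
  exists (rho + pl_enorm x); split; first exact: num_real.
  move=> M hM y Ky; apply: le_trans (mxnorm_le_enorm y) _.
  have : pl_enorm y <= pl_enorm (y - x) + pl_enorm x.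
    by have := enormD (y - x) x; rewrite subrK.
  move: Ky; rewrite /K /= => Ky; lra.
have Kc : compact K by exact: bounded_closed_compact.
have Kne : K !=set0 by exists x.
have gc : {within K, continuous (fun b : 'rV[R]_N => u b + phi (x - b))}.
  apply: continuous_in_subspaceT => y; rewrite inE => Ky.
  exact: g_cont (KO _ Ky).
have [ys ysK hys] := EVT_min_rV Kne Kc gc.
rewrite inE in ysK.
exists ys; split; first exact: KO.
have glob : forall y, Omega y -> u ys + phi (x - ys) <= u y + phi (x - y).
  move=> y Oy.
  have [hy|hy] := leP (pl_enorm (y - x)) rho; first by apply: hys; rewrite inE.
  have := hys x; rewrite inE subrr phi0 addr0 => /(_ Kx) h1.
  have : u x < u y + phi (x - y).
    apply: far => //; move: hy; rewrite /rho -/dist -/rad; lra.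
  by move=> h2; apply: ltW; apply: le_lt_trans h2.
apply/eqP; rewrite eq_le; apply/andP; split; first exact: infle (KO _ ysK).
apply: lb_le_inf; first by exists (u ys + phi (x - ys)); exists ys => //; exact: KO.
by move=> _ [y Oy <-]; exact: glob.
Qed.


Lemma CI ys : Omega ys -> pl_infconv Omega u q eps x = u ys + phi (x - ys) ->
  forall d, 0 < d -> exists2 rho1, 0 < rho1 & forall h y', pl_enorm h < rho1 ->
    Omega y' ->
    u ys + phi (x - ys) + pl_dotv eta h + 2^-1 * pl_quadf X h - d * pl_enorm h ^+ 2
      <= u y' + phi (x + h - y').
Proof.
move=> Oys hmin d d0.
have [_ Hs] := hsub.
have [rho0 [rho00 H0]] := Hs d d0.
have [rx [rx0 Hrx]] := oO Ox.
exists (Num.min rho0 rx); first by rewrite lt_min rho00 rx0.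
move=> h y' hh Oy'; move: hh; rewrite lt_min => /andP[h1 h2].
have ex : x + h - x = h by rewrite (addrC x h) addrK.
have Oxh : Omega (x + h) by apply: Hrx; rewrite ex.
have := H0 (x + h) Oxh; rewrite ex => /(_ h1).
rewrite hmin => /le_trans; apply; exact: infle.
Qed.

Lemma zero_quad (v : 'rV[R]_N) (C dl : R) : 0 < dl ->
  (forall t, 0 < t -> t < dl -> t * pl_dotv v v <= C * t ^+ 2 * pl_dotv v v) -> v = 0.
Proof.
move=> dl0 H.
have [v0|vn0] := eqVneq v 0; first by [].
exfalso.
have n2 : 0 < pl_dotv v v.
  rewrite lt_neqAle dotvv_ge0 andbT; apply/eqP => /esym /dotvv_eq0 h.
  by rewrite h eqxx in vn0.
set t := Num.min (dl / 2) (2^-1 / (`|C| + 1)).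
have C1 : 0 < `|C| + 1 by rewrite ltr_wpDl.
have t0 : 0 < t by rewrite lt_min !divr_gt0.
have tdl : t < dl by rewrite gt_min; apply/orP; left; rewrite ltr_pdivrMr //; lra.
have := H t t0 tdl.
have tC : t * (`|C| + 1) <= 2^-1.
  by rewrite -ler_pdivlMr // ge_min lexx orbT.
have : C * t ^+ 2 * pl_dotv v v <= `|C| * t ^+ 2 * pl_dotv v v.
  by rewrite ler_wpM2r ?dotvv_ge0 // ler_wpM2r ?sqr_ge0 // ler_norm.
move=> h1 h2.
have h3 : t * pl_dotv v v <= `|C| * t ^+ 2 * pl_dotv v v by apply: le_trans h2 h1.
have h4 : 1 <= `|C| * t.
  have : t * pl_dotv v v * 1 <= t * pl_dotv v v * (`|C| * t).
    by rewrite mulr1; apply: le_trans h3 _; apply: eqle; ring.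
  by rewrite ler_pM2l ?mulr_gt0.
have : `|C| * t <= 2^-1 by move: tC; rewrite mulrDr mulr1 mulrC; have := ltW t0; lra.
lra.
Qed.


Lemma tsmall (v : 'rV[R]_N) (t c : R) : 0 < t -> t < c / (pl_enorm v + 1) ->
  pl_enorm (t *: v) < c.
Proof.
move=> t0 tc; rewrite enormZ ger0_norm ?ltW //.
have v1 : 0 < pl_enorm v + 1 by rewrite ltr_wpDl ?enorm_ge0.
rewrite ltr_pdivlMr // in tc.
apply: le_lt_trans tc; rewrite ler_wpM2l ?ltW //; lra.
Qed.

Lemma enormZsq (v : 'rV[R]_N) (t : R) : pl_enorm (t *: v) ^+ 2 = t ^+ 2 * pl_dotv v v.
Proof. by rewrite enormZ exprMn real_normK ?num_real // enorm_sq. Qed.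

Lemma quadf_lb (v : 'rV[R]_N) (t : R) :
  - (CX X * (t ^+ 2 * pl_dotv v v)) <= pl_quadf X (t *: v).
Proof.
rewrite quadfZ -enorm_sq.
have := quadf_bound X v; rewrite ler_norml => /andP[h _].
rewrite mulrCA -mulrN; apply: ler_wpM2l; first exact: sqr_ge0.
exact: h.
Qed.

Lemma z_ne0 ys : Omega ys -> pl_infconv Omega u q eps x = u ys + phi (x - ys) ->
  x - ys != 0.
Proof.
move=> Oys hmin; apply/negP => /eqP hz.
have [rho1 r10 H] := CI Oys hmin ltr01.
have Ke0' := Ke0.
have : eta = 0.
  apply: (@zero_quad eta (2^-1 * CX X + 1 + Ke^-1) (Num.min rho1 1 / (pl_enorm eta + 1))).
    by rewrite divr_gt0 ?lt_min ?r10 ?ltr01 // ltr_wpDl ?enorm_ge0.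
  move=> t t0 tdl.
  have hh := tsmall t0 tdl; move: hh; rewrite lt_min => /andP[h1 h2].
  have := H (t *: eta) ys h1 Oys.
  rewrite hz phi0 addr0 (_ : x + t *: eta - ys = t *: eta); last first.
    by rewrite addrAC hz add0r.
  have hp : phi (t *: eta) <= pl_enorm (t *: eta) ^+ 2 / Ke.
    rewrite /phi ler_pM2r ?invr_gt0 //.
    apply: powq_small; [exact: q2 | exact: enorm_ge0 | exact: ltW].
  move: hp; rewrite enormZsq dotZr.
  have := quadf_lb eta t.
  by move=> h3 h4 h5; apply: fin1 h3 h4 h5.
by move=> e0; apply: (negP eta0); rewrite e0.
Qed.


Lemma eta_eq ys : Omega ys -> pl_infconv Omega u q eps x = u ys + phi (x - ys) ->
  eta = (q * pl_enorm (x - ys) `^ (q - 2) / Ke) *: (x - ys).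
Proof.
move=> Oys hmin.
have zn0 := z_ne0 Oys hmin.
set z := x - ys; set r := pl_enorm z; set P := r `^ (q - 2).
set g := (q * P / Ke) *: z.
have r0 : 0 < r by exact: enorm_gt0.
have q0' := q0.
have Ke0' := Ke0.
have [rho1 r10 H] := CI Oys hmin ltr01.
suff : eta - g = 0 by move/eqP; rewrite subr_eq0 => /eqP.
set v := eta - g.
apply: (@zero_quad v (2^-1 * CX X + 1 + CT q * P / Ke)
   (Num.min rho1 (r / (3 * q)) / (pl_enorm v + 1))).
  by rewrite divr_gt0 ?lt_min ?r10 ?divr_gt0 ?mulr_gt0 // ltr_wpDl ?enorm_ge0.
move=> t t0 tdl.
have hh := tsmall t0 tdl; move: hh; rewrite lt_min => /andP[h1 h2].
have := H (t *: v) ys h1 Oys.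
rewrite (_ : x + t *: v - ys = z + t *: v); last by rewrite addrAC.
have hT := TB q2 zn0 (ltW h2).
have hT' := fin3 Ke0' hT.
have hPz : phi z = P * r ^+ 2 / Ke by rewrite /phi -/r powR_split.
rewrite -hPz -/r -/P in hT'.
have hD : pl_dotv eta (t *: v) = t * pl_dotv v v + (q * P / Ke) * pl_dotv z (t *: v).
  rewrite {1}(_ : eta = v + g); last by rewrite /v subrK.
  by rewrite dotDl dotZr /g dotZl.
have := quadf_lb v t.
rewrite enormZsq in hT'.
rewrite enormZsq.
move=> hB hH.
have -> : (2^-1 * CX X + 1 + CT q * P / Ke) * t ^+ 2 * pl_dotv v v =
   2^-1 * (CX X * (t ^+ 2 * pl_dotv v v)) + t ^+ 2 * pl_dotv v v
   + (CT q * P / Ke) * (t ^+ 2 * pl_dotv v v) by ring.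
exact: fin2 hH hT' hD hB.
Qed.


Definition Cb ys := CT q * pl_enorm (x - ys) `^ (q - 2) / Ke.
Definition Xs ys (b : R) := Xpp X eta (b / pl_dotv eta eta)
   (b ^+ 2 * (pl_quadf X eta - 2 * Cb ys * pl_dotv eta eta) / pl_dotv eta eta ^+ 2).

Lemma subjet_y ys (b : R) : Omega ys -> pl_infconv Omega u q eps x = u ys + phi (x - ys) ->
  pl_subjet Omega u ys eta (Xs ys b).
Proof.
move=> Oys hmin.
have [sX _] := hsub.
split; first exact: Xpp_symm.
move=> d d0.
have zn0 := z_ne0 Oys hmin.
have heta := eta_eq Oys hmin.
set z := x - ys in zn0 heta *; set r := pl_enorm z; set P := r `^ (q - 2).
have r0 : 0 < r by exact: enorm_gt0.
have q0' := q0.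
have Ke0' := Ke0.
set B1 := 1 + `|b|.
have B10 : 0 < B1 by rewrite /B1 ltr_wpDr.
have [rho1 r10 H] := CI Oys hmin (divr_gt0 d0 (exprn_gt0 2 B10)).
exists (Num.min rho1 (r / (3 * q)) / B1); split.
  by rewrite divr_gt0 // lt_min r10 divr_gt0 ?mulr_gt0.
move=> y' Oy' hk.
set k := y' - ys.
set n2 := pl_dotv eta eta.
have n0 : 0 < pl_enorm eta by exact: enorm_gt0.
have n2e : n2 = pl_enorm eta ^+ 2 by rewrite enorm_sq.
have n20 : n2 != 0 by rewrite n2e sqrf_eq0 gt_eqF.
set t := b * pl_dotv eta k / n2.
set j := t *: eta.
have ej : pl_enorm j <= `|b| * pl_enorm k.
  rewrite /j enormZ /t n2e; apply: fin7 => //; exact: CS_abs.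
have eh : pl_enorm (k + j) <= B1 * pl_enorm k.
  apply: le_trans (enormD _ _) _; rewrite /B1 mulrDl mul1r lerD2l //.
have ekB : B1 * pl_enorm k < Num.min rho1 (r / (3 * q)).
  by rewrite mulrC -ltr_pdivlMr.
move: ekB; rewrite lt_min => /andP[k1 k2].
have hh : pl_enorm (k + j) < rho1 by apply: le_lt_trans eh k1.
have hj : pl_enorm j <= r / (3 * q).
  apply: ltW; apply: le_lt_trans _ k2; apply: le_trans ej _.
  by rewrite ler_wpM2r ?enorm_ge0 // /B1 lerDr.
have := H (k + j) y' hh Oy'.
rewrite (_ : x + (k + j) - y' = z + j); last first.
  by rewrite /k /z zm.
have hT := TB q2 zn0 hj.
have hT' := fin3 Ke0' hT.
have hPz : phi z = P * r ^+ 2 / Ke by rewrite /phi -/r powR_split.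
rewrite -hPz -/r -/P in hT'.
rewrite dotDr.
have hDj : pl_dotv eta j = (q * P / Ke) * pl_dotv z j by rewrite heta dotZl.
rewrite -hDj in hT'.
move=> hH.
apply: (fin4 hH hT').
  rewrite /Xs quadf_Xpp /j quadf_shift // enormZsq -/n2 -/k.
  rewrite /Cb -/z -/r -/P.
  by apply: fin5.
exact: fin8 (enorm_ge0 _) eh.
Qed.


Lemma main_point : exists r : R, 0 <= r /\ r `^ q <= Ke * W /\
  - (2 * CT q * L ^+ 2 / (pm - 1)) * (w r + r / q) <=
  (pl_enorm eta) `^ (Num.min (p x - 2) 0) * pl_Fop p x eta X.
Proof.
have [ys [Oys hmin]] := minimizer.
have zn0 := z_ne0 Oys hmin.
have heta := eta_eq Oys hmin.
set z := x - ys in zn0 heta hmin *.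
set r := pl_enorm z; set P := r `^ (q - 2).
have r0 : 0 < r by exact: enorm_gt0.
have P0 : 0 <= P by exact: powR_ge0.
have q0' := q0.
have Ke0' := Ke0.
have Ox' := Ox.
have pm1' := pm1.
have hpx := hpm Ox'.
have hpy := hpm Oys.
have CT0 : 0 <= CT q by rewrite /CT addr_ge0 ?mulr_ge0 ?divr_ge0 ?sqr_ge0 // ltW.
have hphi : phi z <= w r.
  have h2 := infle x Ox'; rewrite subrr phi0 addr0 hmin in h2.
  apply: le_trans (hmod Ox' Oys); rewrite -/z -/r.
  apply: le_trans (ler_norm _); move: h2; lra.
have wr0 : 0 <= w r by apply: wge0; exact: ltW.
have hWr : w r <= W by apply: hW.
have hPz : phi z = P * r ^+ 2 / Ke by rewrite /phi -/r powR_split.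
exists r; split; first exact: ltW.
split.
  have : r `^ q / Ke <= W by apply: le_trans hWr; exact: hphi.
  by rewrite ler_pdivrMr // mulrC.
set a := (p x - 1) / (p ys - 1).
have a0 : 0 < a by rewrite divr_gt0 //; lra.
set b := Num.sqrt a - 1.
have hb : (1 + b) ^+ 2 = a by rewrite /b addrC subrK sqr_sqrtr // ltW.
have hF := (proj2 hvs) ys eta (Xs ys b) Oys (subjet_y b Oys hmin) eta0.
set n2 := pl_dotv eta eta.
have n20 : n2 != 0.
  rewrite /n2 -enorm_sq sqrf_eq0 gt_eqF //; exact: enorm_gt0.
have hFe : pl_Fop p ys eta (Xs ys b) = pl_Fop p x eta X + (p ys - 1) * (2 * Cb ys) * b ^+ 2
    - pl_quadf X eta / n2 * ((p ys - 1) * (1 + b) ^+ 2 - (p x - 1)).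
  rewrite /pl_Fop /Xs tr_Xpp quadf_Xpp enorm_sq -/n2 (dotC (Xv X eta)) dot_Xv.
  by rewrite -fin9.
have hz0 : (p ys - 1) * (1 + b) ^+ 2 - (p x - 1) = 0.
  by rewrite hb /a mulrC divfK ?subrr // gt_eqF //; lra.
rewrite hz0 mulr0 subr0 in hFe.
rewrite hFe in hF.
have hb2 : b ^+ 2 <= (a - 1) ^+ 2 by apply: fin10; exact: ltW.
have ha1 : a - 1 = (p x - p ys) / (p ys - 1).
  by rewrite /a; field; rewrite gt_eqF //; lra.
have hLp : (p x - p ys) ^+ 2 <= (L * r) ^+ 2.
  have h := hL Ox' Oys; rewrite -/z -/r in h.
  rewrite -real_normK ?num_real //.
  by rewrite ler_pXn2r ?nnegrE ?normr_ge0 // (le_trans (normr_ge0 _) h).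
have hCb : Cb ys = CT q * P / Ke by [].
set C5 := 2 * CT q * L ^+ 2 / (pm - 1).
have C50 : 0 <= C5.
  have pmp : 0 <= pm - 1 by lra.
  apply: divr_ge0 => //; apply: mulr_ge0; [apply: mulr_ge0 => // | exact: sqr_ge0].
have hFx : - (C5 * phi z) <= pl_Fop p x eta X.
  have py1 : 0 < p ys - 1 by lra.
  have e1 : (p ys - 1) * b ^+ 2 <= (L * r) ^+ 2 / (pm - 1).
    apply: le_trans (_ : (p ys - 1) * (a - 1) ^+ 2 <= _).
      by apply: ler_wpM2l => //; exact: ltW.
    rewrite ha1 exprMn exprVn.
    have -> : (p ys - 1) * ((p x - p ys) ^+ 2 / (p ys - 1) ^+ 2) =
      (p x - p ys) ^+ 2 / (p ys - 1) by field; rewrite gt_eqF.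
    apply: le_trans (_ : (L * r) ^+ 2 / (p ys - 1) <= _).
      by apply: ler_wpM2r => //; rewrite invr_ge0 ltW.
    apply: ler_wpM2l; first exact: sqr_ge0.
    by rewrite lef_pV2 ?posrE //; lra.
  have e2 : (p ys - 1) * (2 * Cb ys) * b ^+ 2 <= C5 * phi z.
    rewrite hPz hCb /C5.
    have -> : (p ys - 1) * (2 * (CT q * P / Ke)) * b ^+ 2 =
       (2 * CT q * P / Ke) * ((p ys - 1) * b ^+ 2) by ring.
    have -> : 2 * CT q * L ^+ 2 / (pm - 1) * (P * r ^+ 2 / Ke) =
       (2 * CT q * P / Ke) * ((L * r) ^+ 2 / (pm - 1)) by rewrite exprMn; ring.
    apply: ler_wpM2l; last exact: e1.
    apply: divr_ge0; last exact: ltW.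
    apply: mulr_ge0 => //; apply: mulr_ge0 => //; lra.
  move: hF e2; move: (pl_Fop p x eta X) ((p ys - 1) * (2 * Cb ys) * b ^+ 2) (C5 * phi z).
  move=> F1 F2 F3; lra.
have hn : pl_enorm eta = q * P * r / Ke.
  have c0 : 0 <= q * P / Ke.
    by apply: divr_ge0; [apply: mulr_ge0 => //; exact: ltW | exact: ltW].
  by rewrite heta enormZ (ger0_norm c0) -/r mulrAC.
apply: fin12 hFx _.
- exact: powR_ge0.
- exact: C50.
apply: fin11.
- exact: enorm_gt0.
- by rewrite le_min; apply/andP; split; lra.
- by rewrite ge_min lexx orbT.
- exact: q0'.
- exact: phi_ge0.
- exact: hphi.
- exact: wr0.
- exact: ltW.
- by rewrite hn hPz; field; rewrite !gt_eqF.
Qed.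

End Main.



Lemma right_near (R : realType) (P : R -> Prop) (e : R) : 0 < e ->
  (forall t, 0 < t -> t < e -> P t) -> \forall t \near 0^'+, P t.
Proof.
move=> e0 H; apply/nbhs_normP; exists e => //= t ht tpos.
apply: H => //; move: ht => /=; rewrite sub0r normrN gtr0_norm //.
Qed.

Lemma near_right (R : realType) (P : R -> Prop) :
  (\forall t \near 0^'+, P t) -> exists2 e, 0 < e & forall t, 0 < t -> t < e -> P t.
Proof.
move=> /nbhs_normP [e e0 H]; exists e => // t t0 te.
apply: H => //=; rewrite sub0r normrN gtr0_norm //.
Qed.

Theorem lemma5p3 (R : realType) (N : nat) (Omega : set 'rV[R]_N)
  (p : 'rV[R]_N -> R) (q : R) (w : R -> R) :
  pl_eopen Omega -> pl_ebounded Omega ->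
  (forall x, Omega x -> 1 < p x) ->
  pl_lipschitz_on Omega p ->
  (exists pminus : R, 1 < pminus /\ forall x, Omega x -> pminus <= p x) ->
  2 <= q ->
  pl_modulus w ->
  exists E : R -> R, (E e @[e --> 0^'+] --> 0) /\
    forall u : 'rV[R]_N -> R,
      pl_has_modulus Omega u w ->
      pl_visc_super Omega p u ->
      forall (eps : R) (x eta : 'rV[R]_N) (X : 'M[R]_N),
        0 < eps ->
        pl_inner_set Omega (pl_rad Omega u q eps) x ->
        pl_subjet Omega (pl_infconv Omega u q eps) x eta X ->
        eta != 0 ->
        E eps <= (pl_enorm eta) `^ (Num.min (p x - 2) 0) * pl_Fop p x eta X.
Proof.
move=> oO [M0 hM0] hp1 [L hL] [pm [pm1 hpm]] q2 [wge0 [wmon wlim]].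
have q0 : 0 < q by apply: lt_le_trans q2.
set D0 := 2 * Num.max M0 0.
have D00 : 0 <= D0 by rewrite /D0 mulr_ge0 // le_max lexx orbT.
set W := w D0.
have W0 : 0 <= W by exact: wge0.
have hW : forall x y, Omega x -> Omega y -> w (pl_enorm (x - y)) <= W.
  move=> x y Ox Oy; apply: wmon; first exact: enorm_ge0.
  apply: le_trans (enormD _ _) _; rewrite enormN.
  have := hM0 _ Ox; have := hM0 _ Oy.
  have : M0 <= Num.max M0 0 by rewrite le_max lexx.
  rewrite /D0; lra.
have wsmall : forall e, 0 < e -> exists2 d, 0 < d & forall t, 0 <= t -> t < d -> w t < e.
  move=> e e0.
  have /cvgrPdist_lt /(_ e e0) /near_right [d d0 Hd] := wlim.
  exists d => // t t0 td.
  have d2 : 0 < d / 2 by rewrite divr_gt0.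
  have d2d : d / 2 < d by rewrite ltr_pdivrMr //; lra.
  have hd2 : w (d / 2) < e.
    by have := Hd (d / 2) d2 d2d; rewrite sub0r normrN (ger0_norm (wge0 _ (ltW d2))).
  have [t00|tp] := eqVneq t 0.
    by rewrite t00; apply: le_lt_trans hd2; apply: wmon => //; exact: ltW.
  have t0' : 0 < t by rewrite lt_neqAle eq_sym tp t0.
  by have := Hd t t0' td; rewrite sub0r normrN (ger0_norm (wge0 _ t0)).
set C5 := 2 * CT q * L ^+ 2 / (pm - 1).
have CT0 : 0 <= CT q by rewrite /CT addr_ge0 ?mulr_ge0 ?divr_ge0 ?sqr_ge0 // ltW.
have C50 : 0 <= C5.
  have pmp : 0 <= pm - 1 by lra.
  apply: divr_ge0 => //; apply: mulr_ge0; [apply: mulr_ge0 => // | exact: sqr_ge0].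
pose delta (eps : R) := (q * eps `^ (q - 1) * W) `^ (q^-1).
have delta0 : forall eps, 0 <= delta eps by move=> eps; exact: powR_ge0.
exists (fun eps => - C5 * (w (delta eps) + delta eps / q)).
split.
  apply/cvgrPdist_lt => e e0.
  have C51 : 0 < C5 + 1 by lra.
  set e' := e / (2 * (C5 + 1)).
  have e'0 : 0 < e' by rewrite divr_gt0 // mulr_gt0.
  have [d1 d10 Hd1] := wsmall e' e'0.
  set tau := Num.min (d1 / 2) e'.
  have tau0 : 0 < tau by rewrite lt_min divr_gt0.
  have taud1 : tau < d1.
    apply: le_lt_trans (_ : d1 / 2 < d1); first by rewrite ge_min lexx.
    by rewrite ltr_pdivrMr //; lra.
  have taue : tau <= e' by rewrite ge_min lexx orbT.
  have W1 : 0 < W + 1 by lra.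
  have qW : 0 < q * (W + 1) by rewrite mulr_gt0.
  set B := tau `^ q / (q * (W + 1)).
  have B0 : 0 < B by rewrite divr_gt0 // powR_gt0.
  have q1 : 0 < q - 1 by lra.
  set et := B `^ ((q - 1)^-1).
  have et0 : 0 < et by rewrite powR_gt0.
  apply: (right_near et0) => eps eps0 epsl.
  have h1 : eps `^ (q - 1) <= B.
    have -> : B = et `^ (q - 1) by rewrite -powRrM mulVf ?gt_eqF // powRr1 // ltW.
    apply: ge0_ler_powR; [exact: ltW | rewrite nnegrE; exact: ltW | rewrite nnegrE; exact: ltW | exact: ltW].
  have h2 : q * eps `^ (q - 1) * W <= tau `^ q.
    have : q * eps `^ (q - 1) * W <= q * B * W.
      by apply: ler_wpM2r => //; apply: ler_wpM2l => //; exact: ltW.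
    move=> /le_trans; apply.
    rewrite /B (_ : q * (tau `^ q / (q * (W + 1))) * W = tau `^ q * (W / (W + 1)));
      last by field; rewrite !gt_eqF.
    rewrite -[leRHS]mulr1; apply: ler_wpM2l; first exact: powR_ge0.
    by rewrite ler_pdivrMr // mul1r; lra.
  have dtau : delta eps <= tau.
    have -> : tau = (tau `^ q) `^ (q^-1) by rewrite -powRrM mulfV ?gt_eqF // powRr1 // ltW.
    apply: ge0_ler_powR => //; first by rewrite invr_ge0 ltW.
      rewrite nnegrE; apply: mulr_ge0 => //; apply: mulr_ge0; [exact: ltW | exact: powR_ge0].
    by rewrite nnegrE powR_ge0.
  have hwd : w (delta eps) < e'.
    apply: le_lt_trans (wmon _ _ (delta0 eps) dtau) _.
    by apply: Hd1 => //; exact: ltW.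
  have hdq : delta eps / q <= e'.
    apply: le_trans (_ : delta eps <= e'); last exact: le_trans dtau taue.
    by rewrite ler_pdivrMr // ler_peMr //; lra.
  have S0 : 0 <= w (delta eps) + delta eps / q.
    by rewrite addr_ge0 // ?wge0 // divr_ge0 // ltW.
  rewrite sub0r normrN mulNr normrN ger0_norm; last exact: mulr_ge0.
  apply: le_lt_trans (_ : C5 * (2 * e') < e).
    by apply: ler_wpM2l => //; lra.
  rewrite /e' (_ : C5 * (2 * (e / (2 * (C5 + 1)))) = e * (C5 / (C5 + 1)));
    last by field; rewrite gt_eqF.
  rewrite -[ltRHS]mulr1 ltr_pM2l // ltr_pdivrMr //; lra.
move=> u hmod hvs eps x eta X eps0 hin hsub eta0.
have [r [r0 [rq hineq]]] := main_point oO q2 hL pm1 hpm wge0 wsmall hW hmod hvs eps0 hin hsub eta0.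
apply: le_trans hineq.
have rd : r <= delta eps.
  have -> : r = (r `^ q) `^ (q^-1) by rewrite -powRrM mulfV ?gt_eqF // powRr1.
  apply: ge0_ler_powR => //; first by rewrite invr_ge0 ltW.
    by rewrite nnegrE powR_ge0.
  by rewrite nnegrE; apply: mulr_ge0 => //; apply: mulr_ge0; [exact: ltW | exact: powR_ge0].
have hw : w r <= w (delta eps) by apply: wmon.
have : r / q <= delta eps / q by apply: ler_wpM2r => //; rewrite invr_ge0 ltW.
move=> h2; rewrite !mulNr lerN2; apply: ler_wpM2l => //; lra.
Qed.
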